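(* Let $\psi,\varphi$ be CNF formulas that contain no tautological clauses, and let $X\subseteq\mathrm{Vars}(\psi)\cup\mathrm{Vars}(\varphi)$. If $\psi\models\varphi$, then $\psi[Y]\models\varphi[Y]$ for every $Y\in\mathcal{A}_3(X)$.
   Context: A clause is tautological if it contains both $x$ and $\neg x$. An extended literal is a literal or a fresh symbol $x_\varepsilon$ for a variable $x$. For a CNF formula $\phi$: if $\ell$ is a literal, $\phi[\ell]$ deletes all clauses containing $\ell$ and deletes the complementary literal $\sim\!\ell$ from the remaining clauses; $\phi[x_\varepsilon]$ deletes all occurrences of $x$ and $\neg x$ from all clauses. $\mathcal{A}_3(X)$ is the set of all sets $\{a_x : x\in X\}$ with $a_x\in\{x,\neg x,x_\varepsilon\}$; for $Y\in\mathcal{A}_3(X)$, $\phi[Y]$ is the successive application of the reducts by all elements of $Y$ (order irrelevant). *)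

(* Defs.v *)
From mathcomp Require Import all_boot.
Set Implicit Arguments. Unset Strict Implicit. Unset Printing Implicit Defensive.

(* Variables are natural numbers; a literal (x, true) is x, (x, false) is ~x. *)
Definition var := nat.
Definition lit := (nat * bool)%type.
Definition clause := seq lit.
Definition cnf := seq clause.

Definition compl (l : lit) : lit := (l.1, ~~ l.2).

Definition tautological (C : clause) : bool :=
  has (fun l => compl l \in C) C.

Definition vars (phi : cnf) : seq var := [seq l.1 | l <- flatten phi].

Definition sat_lit (a : var -> bool) (l : lit) : bool := a l.1 == l.2.
Definition sat_clause (a : var -> bool) (C : clause) : bool := has (sat_lit a) C.
Definition sat (a : var -> bool) (phi : cnf) : bool := all (sat_clause a) phi.

Definition entails (psi phi : cnf) : Prop :=
  forall a : var -> bool, sat a psi -> sat a phi.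

Inductive elit := ELit of lit | EEps of var.

Definition reduct_lit (phi : cnf) (l : lit) : cnf :=
  [seq [seq m <- C | m != compl l] | C <- phi & l \notin C].

Definition reduct_eps (phi : cnf) (x : var) : cnf :=
  [seq [seq m <- C | m.1 != x] | C <- phi].

Definition reduct (phi : cnf) (e : elit) : cnf :=
  match e with ELit l => reduct_lit phi l | EEps x => reduct_eps phi x end.

Inductive choice3 := CPos | CNeg | CEps.

Definition elit_of (x : var) (c : choice3) : elit :=
  match c with CPos => ELit (x, true) | CNeg => ELit (x, false) | CEps => EEps x end.

(* An element Y = {a_x : x in X} of A_3(X) is given by a choice function
   ch : var -> choice3 (only its values on X matter); phi[Y] is the
   successive application of the reducts by all a_x, x in X. *)
Definition A3_elems (X : seq var) (ch : var -> choice3) : seq elit :=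
  [seq elit_of x (ch x) | x <- X].

Definition reduct_set (phi : cnf) (Y : seq elit) : cnf := foldl reduct phi Y.

(* Main.v *)
Require Import Defs.
From mathcomp Require Import all_boot.

Definition upd (a : var -> bool) (x : var) (b : bool) : var -> bool :=
  fun y => if y == x then b else a y.

Lemma sat_lit_upd a x b (m : lit) :
  sat_lit (upd a x b) m = if m.1 == x then b == m.2 else sat_lit a m.
Proof. by rewrite /sat_lit /upd; case: (m.1 == x). Qed.

Lemma red_lit_l a psi (l : lit) :
  sat a (reduct_lit psi l) -> sat (upd a l.1 l.2) psi.
Proof.
move=> /allP H; apply/allP => C HC.
case: (boolP (l \in C)) => hl.
  by apply/hasP; exists l => //; rewrite sat_lit_upd eqxx.
have := H [seq m <- C | m != compl l].
rewrite map_f ?mem_filter ?HC ?hl // => /(_ erefl) /hasP [m].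
rewrite mem_filter => /andP [hm1 hm2] hs.
apply/hasP; exists m => //; rewrite sat_lit_upd.
case: ifP => // e.
clear H HC.
move: m l e hm1 hm2 hl hs => [m1 m2] [l1 l2] /= /eqP -> .
by rewrite /compl /=; case: m2; case: l2 => //=; rewrite eqxx.
Qed.

Lemma red_lit_r a phi (l : lit) :
  sat (upd a l.1 l.2) phi -> sat a (reduct_lit phi l).
Proof.
move=> /allP H; apply/allP => C' /mapP [C].
rewrite mem_filter => /andP [hl HC] ->.
move: (H C HC) => /hasP [m hm].
rewrite sat_lit_upd; case: ifP => e hs.
  clear H HC.
  move: m l e hs hm hl => [m1 m2] [l1 l2] /= /eqP -> /eqP ->.
  by move=> ->.
apply/hasP; exists m => //; rewrite mem_filter hm andbT.
apply/eqP => E; move: e; by rewrite E /compl eqxx.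
Qed.

Lemma red_eps_l a psi x b :
  sat a (reduct_eps psi x) -> sat (upd a x b) psi.
Proof.
move=> /allP H; apply/allP => C HC.
have := H [seq m <- C | m.1 != x].
rewrite map_f // => /(_ erefl) /hasP [m].
rewrite mem_filter => /andP [hm1 hm2] hs.
by apply/hasP; exists m => //; rewrite sat_lit_upd (negbTE hm1).
Qed.

Lemma red_eps_r a phi x :
  all (fun C => ~~ tautological C) phi ->
  (forall b, sat (upd a x b) phi) -> sat a (reduct_eps phi x).
Proof.
move=> /allP NT H; apply/allP => C' /mapP [C HC ->].
have := H ((x, false) \in C) => /allP /(_ C HC) /hasP [m hm].
rewrite sat_lit_upd; case: ifP => e hs.
  exfalso.
  move: m e hs hm => [m1 m2] /= /eqP -> /eqP <-.
  have := NT C HC; rewrite /tautological => /hasPn Hn.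
  case: (boolP ((x, false) \in C)) => h1 h2.
    by move: (Hn _ h2); rewrite /compl /= h1.
  by rewrite h2 in h1.
rewrite /sat_clause; apply/hasP; exists m => //; by rewrite mem_filter hm e.
Qed.

Lemma taut_filter p (C : clause) : tautological (filter p C) -> tautological C.
Proof.
move=> /hasP [l]; rewrite !mem_filter => /andP [_ h1] /andP [_ h2].
by apply/hasP; exists l.
Qed.

Lemma nt_reduct phi e :
  all (fun C => ~~ tautological C) phi ->
  all (fun C => ~~ tautological C) (reduct phi e).
Proof.
move=> /allP NT; apply/allP => C'; case: e => [l|x] /=.
  move=> /mapP [C]; rewrite mem_filter => /andP [_ HC] ->.
  by apply/negP => /taut_filter; apply/negP; apply: NT.
move=> /mapP [C HC ->].
by apply/negP => /taut_filter; apply/negP; apply: NT.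
Qed.

Lemma entails_reduct psi phi e :
  all (fun C => ~~ tautological C) phi ->
  entails psi phi -> entails (reduct psi e) (reduct phi e).
Proof.
move=> NT E a; case: e => [l|x] /= Ha.
  by apply: red_lit_r; apply: E; apply: red_lit_l.
apply: red_eps_r => // b; apply: E; exact: red_eps_l.
Qed.

Lemma entails_fold (Y : seq elit) : forall psi phi,
  all (fun C => ~~ tautological C) phi ->
  entails psi phi -> entails (foldl reduct psi Y) (foldl reduct phi Y).
Proof.
elim: Y => [|e Y IH] psi phi NT E //=.
apply: IH; first exact: nt_reduct.
exact: entails_reduct.
Qed.

Theorem mainTheorem6 (psi phi : cnf) (X : seq var) :
  all (fun C => ~~ tautological C) psi ->
  all (fun C => ~~ tautological C) phi ->
  {subset X <= vars psi ++ vars phi} ->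
  entails psi phi ->
  forall ch : var -> choice3,
    entails (reduct_set psi (A3_elems X ch)) (reduct_set phi (A3_elems X ch)).
Proof.
move=> _ NT _ E ch; exact: entails_fold.
Qed.
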